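(* Let $n\ge 3$ and let $D_{2n}=\langle a,b : a^n=b^2=e,\ bab=a^{-1}\rangle$ be the dihedral group of order $2n$. Let $H$ be a normal subgroup of $D_{2n}$. Then $\Gamma_{D_{2n},H}$ admits a perfect code if and only if either $H=D_{2n}$, or one of the following holds: (1) $n$ is odd and $H\le\langle a\rangle$; (2) $n$ is even and $H=\langle a^2,b\rangle$, or $H=\langle a^2,ab\rangle$, or $H=\langle a^t\rangle$ for a positive divisor $t$ of $n$ such that either $n/t$ is odd, or $n/t=2$, or $n/t\ge 4$ is even and $t$ is odd.
   Context: For a normal subgroup $H$ of a finite group $G$ with identity $e$, the subgroup sum graph $\Gamma_{G,H}$ is the simple undirected graph with vertex set $G$ in which distinct vertices $x,y$ are adjacent if and only if $xy\in H\setminus\{e\}$. A perfect code in a graph is a set $C$ of vertices that is independent and such that every vertex not in $C$ is adjacent to exactly one vertex of $C$. *)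

(* Defs.v *)
From mathcomp Require Import all_boot all_fingroup.
Set Implicit Arguments. Unset Strict Implicit. Unset Printing Implicit Defensive.
Import GroupScope.
Local Open Scope group_scope.

(* Subgroup sum graph Gamma_{G,H}: vertex set G; distinct x, y adjacent
   iff x * y \in H \ {e}. *)
Definition ssg_adj (gT : finGroupType) (H : {set gT}) (x y : gT) : bool :=
  (x != y) && (x * y \in H :\ 1).

Definition perfect_code (gT : finGroupType) (G H C : {set gT}) : bool :=
  [&& C \subset G,
      [forall x in C, forall y in C, ~~ ssg_adj H x y] &
      [forall x in G :\: C, #|[set y in C | ssg_adj H x y]| == 1%N]].

(* Main.v *)
Require Import Defs.
From mathcomp Require Import all_boot all_fingroup cyclic.
From mathcomp Require Import zify.
From Stdlib Require Import Lia.
Set Implicit Arguments. Unset Strict Implicit. Unset Printing Implicit Defensive.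

Lemma evenE m : ~~ odd m -> m = m./2 * 2.
Proof. by move=> h; have := odd_double_half m; rewrite (negPf h) add0n -muln2. Qed.
Lemma oddE m : odd m -> m = (m./2 * 2).+1.
Proof. by move=> h; have := odd_double_half m; rewrite h -muln2 add1n. Qed.

Arguments evenE {m}. Arguments oddE {m}.

Lemma A1 n t k : (t %| n)%N -> ~~ odd n -> odd (n %/ t) -> (t %| k * 2)%N ->
  ~~ (t %| k)%N -> (t %| k + n./2)%N.
Proof.
move=> tn en od tk ntk.
have hn : n = (n %/ t) * t by rewrite divnK.
set d := n %/ t in hn od.
have et : ~~ odd t by move: en; rewrite hn oddM od.
have ht := evenE et; set s := t./2 in ht.
case/dvdnP: tk => j hj.
have ej : odd j.
  apply/negPn/negP => oj; move/negP: ntk; apply.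
  have hj' := evenE oj.
  apply/dvdnP; exists (j./2); rewrite hj' ht in hj; rewrite ht. clear -hj; nia.
have hj2 := oddE ej; set i := j./2 in hj2.
have hd := oddE od; set e := d./2 in hd.
have hn2 : n./2 = d * s.
  by rewrite hn ht mulnA muln2 doubleK.
apply/dvdnP; exists (i + e + 1).
rewrite hn2. rewrite ht in hj. rewrite hj2 in hj. rewrite hd. rewrite ht.
clear -hj; nia.
Qed.

Lemma A2 n t k : (0 < t)%N -> (t %| n)%N -> ~~ odd (n %/ t) -> ~~ odd t ->
  (n %| k * 2)%N -> (t %| t./2 + k)%N -> False.
Proof.
move=> t0 tn ed et nk tk.
have hn : n = (n %/ t) * t by rewrite divnK.
set d := n %/ t in hn ed.
have hd := evenE ed; set e := d./2 in hd.
have ht := evenE et; set s := t./2 in ht tk.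
case/dvdnP: nk => m hm.
have tk' : (t %| k)%N.
  apply/dvdnP; exists (m * e); rewrite hn hd in hm. clear -hm; nia.
move: tk; rewrite dvdn_addl // => ts.
have := dvdn_leq _ ts.
rewrite ht in t0 ts *. clear -t0; move=> h.
have : (0 < s)%N by lia.
move=> /h. lia.
Qed.
Arguments A1 {n t k}. Arguments A2 {n t k}.

Import GroupScope.
Local Open Scope group_scope.


Section Gen.
Variable gT : finGroupType.

Lemma sq_mul (x : gT) : x ^+ 2 = x * x.
Proof. by rewrite expgS expg1. Qed.

Lemma inv_sq (x : gT) : (x ^+ 2 == 1) = (x^-1 == x).
Proof. by rewrite sq_mul eq_invg_mul. Qed.

Definition key (x : gT) : nat :=
  if x ^+ 2 == 1 then nat_of_ord (enum_rank x)
  else (#|gT| + minn (enum_rank x) (enum_rank x^-1))%N.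

Lemma key_inv (x : gT) : key x^-1 = key x.
Proof.
rewrite /key !inv_sq invgK; case: (eqVneq x^-1 x) => [e|ne].
  by rewrite e.
by rewrite minnC.
Qed.

Lemma key_eq (x y : gT) : key x = key y -> y = x \/ y = x^-1.
Proof.
rewrite /key !inv_sq.
have rk_lt (z : gT) : (enum_rank z < #|gT|)%N.
  exact (ltn_ord (enum_rank z)).
case: (eqVneq x^-1 x) => hx; case: (eqVneq y^-1 y) => hy.
- by move/val_inj/enum_rank_inj=> ->; left.
- move=> e; have := rk_lt x; rewrite e; lia.
- move=> e; have := rk_lt y; rewrite -e; lia.
- move/addnI=> e.
  have mm (p q : nat) : (minn p q == p) || (minn p q == q).
    by case: (leqP p q) => h; apply/orP; [left|right]; apply/eqP; lia.
  have := mm (enum_rank x) (enum_rank x^-1).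
  have := mm (enum_rank y) (enum_rank y^-1).
  rewrite e; case/orP=> /eqP -> /orP [] /eqP /val_inj /enum_rank_inj.
  + by left.
  + by move=> ->; right.
  + by move/(congr1 invg); rewrite !invgK => ->; right.
  + by move/(congr1 invg); rewrite !invgK => ->; left.
Qed.


Lemma myK (x y : gT) : y * x * x^-1 = y.
Proof. by rewrite -mulgA mulgV mulg1. Qed.
Lemma myKV (x y : gT) : y * x^-1 * x = y.
Proof. by rewrite -mulgA mulVg mulg1. Qed.
Lemma myKl (x y : gT) : x^-1 * (x * y) = y.
Proof. by rewrite mulgA mulVg mul1g. Qed.

Definition crit (G H : {set gT}) :=
  (#|H| <= 2)%N \/
  (forall x, x \in G -> x ^+ 2 \in H -> exists2 y, y \in G & (x * y \in H) && (y ^+ 2 == 1)).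

Section PC.
Variables G H : {group gT}.
Hypothesis nsHG : H <| G.

Lemma sHG : H \subset G.
Proof. by case/andP: nsHG. Qed.

Lemma inHG u : u \in H -> u \in G.
Proof. exact: (subsetP sHG). Qed.

Lemma swapH (u v : gT) : u \in G -> v \in G -> u * v \in H -> v * u \in H.
Proof.
move=> uG vG uvH; case/andP: nsHG => _ nHG.
have : (u * v) ^ u \in H by rewrite memJ_norm // (subsetP nHG).
by rewrite conjgE !mulgA mulVg mul1g.
Qed.

Lemma mem_K (x y : gT) : (y \in x^-1 *: H) = (x * y \in H).
Proof. by rewrite mem_lcoset invgK. Qed.

Lemma K_G (x y : gT) : x \in G -> x * y \in H -> y \in G.
Proof.
move=> xG xyH; have : x^-1 * (x * y) \in G by rewrite groupM ?groupV // inHG.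
by rewrite myKl.
Qed.

Lemma K_mul (x u v : gT) : x \in G -> x ^+ 2 \in H -> x * u \in H -> x * v \in H -> u * v \in H.
Proof.
move=> xG x2 xu xv.
have uG := K_G xG xu; have vG := K_G xG xv.
have ux := swapH xG uG xu.
have : (u * x) * (x ^+ 2)^-1 * (x * v) \in H.
  by rewrite groupM // groupM // groupV.
by rewrite expgS expg1 invMg !mulgA myK myKV.
Qed.

Lemma adjE (x y : gT) : ssg_adj H x y = [&& x != y, x * y != 1 & x * y \in H].
Proof. by rewrite /ssg_adj in_setD1. Qed.

Lemma mul1_inv (x y : gT) : (x * y == 1) = (x == y^-1).
Proof. by rewrite (eq_mulgV1 x y^-1) invgK. Qed.

Lemma pc_crit_nec (C : {set gT}) : perfect_code G H C -> crit G H.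
Proof.
case/and3P=> sCG /forallP indep /forallP dom.
have indep' u v : u \in C -> v \in C -> ssg_adj H u v = false.
  by move=> uC vC; apply/negbTE; have := indep u; rewrite uC => /forallP/(_ v); rewrite vC.
have dom' u : u \in G -> u \notin C -> #|[set y in C | ssg_adj H u y]| = 1%N.
  by move=> uG uC; have := dom u; rewrite inE uC uG => /eqP.
case: (leqP #|H| 2) => [h|hH]; [by left | right].
move=> x xG x2H.
case: (boolP [exists y in G, (x * y \in H) && (y ^+ 2 == 1)]).
  by case/exists_inP=> y yG hy; exists y.
rewrite negb_exists_in => /forall_inP noinv.
exfalso.
have [c cC xcH] : exists2 c, c \in C & x * c \in H.
  case: (boolP (x \in C)) => xC; first by exists x; rewrite // -sq_mul.
  have := dom' x xG xC; move/eqP/cards1P=> [w hw].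
  have : w \in [set y in C | ssg_adj H x y] by rewrite hw set11.
  by rewrite inE adjE => /and4P [wC _ _ xw]; exists w.
have cG := K_G xG xcH.
have c2 : c ^+ 2 != 1 by have := noinv c cG; rewrite xcH.
have cic : c^-1 != c by rewrite -inv_sq.
have xciH : x * c^-1 \in H.
  have cx := swapH xG cG xcH.
  have : (x ^+ 2) * (c * x)^-1 \in H by rewrite groupM ?groupV.
  by rewrite expgS expg1 invMg !mulgA myK.
have [z zK] : exists z, z \in (x^-1 *: H) :\ c :\ c^-1.
  apply/card_gt0P.
  have h1 := cardsD1 c (x^-1 *: H); have h2 := cardsD1 c^-1 (x^-1 *: H :\ c).
  rewrite card_lcoset in h1.
  move: hH h1 h2; rewrite !inE mem_K xcH mem_K xciH cic /=. set p := #|H|. set q := #|_ :\ c|. set r := #|_ :\ c^-1|. lia.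
move: zK; rewrite !inE mem_K => /and3P [zci zc xzH].
have zG := K_G xG xzH.
have adjzc : ssg_adj H z c.
  by rewrite adjE zc mul1_inv zci (K_mul xG x2H xzH xcH).
have zC : z \notin C by apply/negP => zC; rewrite indep' in adjzc.
have adjzci : ssg_adj H z c^-1.
  by rewrite adjE zci mul1_inv invgK zc (K_mul xG x2H xzH xciH).
case: (boolP (c^-1 \in C)) => ciC.
  have := dom' z zG zC; move/eqP/cards1P=> [w hw].
  have h1 : c \in [set w] by rewrite -hw inE cC adjzc.
  have h2 : c^-1 \in [set w] by rewrite -hw inE ciC adjzci.
  by move: h1 h2 cic; rewrite !inE => /eqP -> /eqP ->; rewrite eqxx.
have := dom' c^-1 (groupVr cG) ciC; move/eqP/cards1P=> [w hw].
have : w \in [set y in C | ssg_adj H c^-1 y] by rewrite hw set11.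
rewrite inE adjE => /and4P [wC ciw ciw1 ciwH].
have xwH : x * w \in H.
  have : (x * c) * (c^-1 * w) \in H by rewrite groupM.
  by rewrite !mulgA myK.
have : ssg_adj H w c.
  rewrite adjE (K_mul xG x2H xwH xcH) mul1_inv andbT.
  apply/andP; split.
    by apply/negP => /eqP wc; move: ciw1; rewrite wc mulVg eqxx.
  by apply/negP => /eqP wc; move: ciC; rewrite -wc wC.
by rewrite indep'.
Qed.


Lemma key_lt (x : gT) : x ^+ 2 == 1 -> (key x < #|gT|)%N.
Proof. by rewrite /key => ->; exact (ltn_ord (enum_rank x)). Qed.

Lemma key_ge (x : gT) : x ^+ 2 != 1 -> (#|gT| <= key x)%N.
Proof. by rewrite /key => /negPf ->; rewrite leq_addr. Qed.

Lemma pc_crit_suf : crit G H -> exists C, perfect_code G H C.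
Proof.
move=> cr.
pose C := [set u in G | [forall w in G, (u^-1 * w \in H) ==> (key u <= key w)%N]].
have CP u w : u \in C -> w \in G -> u^-1 * w \in H -> (key u <= key w)%N.
  by rewrite inE => /andP [_ /forall_inP h] wG uwH; have := h w wG; rewrite uwH.
have CG u : u \in C -> u \in G by rewrite inE => /andP [].
have Cinv u : u \in C -> u^-1 \in C.
  move=> uC; rewrite inE groupV (CG _ uC); apply/forall_inP => w wG.
  rewrite invgK key_inv; apply/implyP => uwH.
  rewrite -(key_inv w); apply: CP => //; first by rewrite groupV.
  by rewrite -invMg groupV (swapH (CG _ uC) wG uwH).
have CI u : u \in G -> (forall w, w \in G -> u^-1 * w \in H -> (key u <= key w)%N) -> u \in C.
  move=> uG h; rewrite inE uG; apply/forall_inP => w wG; apply/implyP; exact: h.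
clearbody C.
exists C; apply/and3P; split.
- by apply/subsetP => u /CG.
- apply/forall_inP => u uC; apply/forall_inP => v vC.
  rewrite adjE; apply/negP => /and3P [uv uv1 uvH].
  have uG := CG _ uC; have vG := CG _ vC.
  have h1 : (key v <= key u)%N.
    by rewrite -(key_inv u); apply: CP; rewrite ?groupV // -invMg groupV.
  have h2 : (key u <= key v)%N.
    rewrite -(key_inv v); apply: CP; rewrite ?groupV // -invMg groupV.
    exact: swapH.
  have : key u = key v by apply/eqP; rewrite eqn_leq h1 h2.
  case/key_eq => e.
    by move: uv; rewrite e eqxx.
  by move: uv1; rewrite e mulgV eqxx.
- apply/forall_inP => z; rewrite inE => /andP [zC zG].
  have ziC : z^-1 \notin C.
    by apply/negP => /Cinv; rewrite invgK; apply/negP.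
  have zK : z^-1 \in z^-1 *: H by rewrite mem_K mulgV group1.
  case: (arg_minnP key zK) => m mK mmin.
  have {}mK : z * m \in H by rewrite -mem_K; exact mK.
  have {}mmin w : z * w \in H -> (key m <= key w)%N.
    by move=> h; apply: mmin; rewrite -mem_K in h; exact h.
  have mG := K_G zG mK.
  have mC : m \in C.
    apply: CI => // w wG mwH; apply: mmin.
    have : (z * m) * (m^-1 * w) \in H by rewrite groupM.
    by rewrite !mulgA myK.
  have inCK y : y \in C -> z * y \in H -> y = m \/ y = m^-1.
    move=> yC zyH; apply: key_eq.
    apply/eqP; rewrite eqn_leq; apply/andP; split; first by apply: mmin.
    apply: CP => //.
    have : (z * y)^-1 * (z * m) \in H by rewrite groupM ?groupV.
    by rewrite invMg -!mulgA myKl.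
  have SE : [set y in C | ssg_adj H z y] = [set y in C | z * y \in H].
    apply/setP => y; rewrite !inE adjE; case: (boolP (y \in C)) => //= yC.
    have h1 : z != y by apply/negP => /eqP zy; move: zC; rewrite zy yC.
    have h2 : z != y^-1 by apply/negP => /eqP zy; move: ziC; rewrite zy invgK yC.
    by rewrite mul1_inv h1 h2.
  rewrite SE.
  case: (boolP [&& m^-1 != m & z * m^-1 \in H]) => [/andP [mim zmiH] | hm].
    exfalso.
    have m2 : m ^+ 2 != 1 by rewrite inv_sq.
    case: cr => [cH | cr].
      have h1 := cardsD1 m (z^-1 *: H); have h2 := cardsD1 m^-1 (z^-1 *: H :\ m).
      have h3 := cardsD1 z^-1 (z^-1 *: H :\ m :\ m^-1).
      rewrite card_lcoset in h1.
      have zim : z^-1 != m by apply/negP => /eqP e; move: ziC; rewrite e mC.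
      have zimi : z^-1 != m^-1 by apply/negP => /eqP e; move: ziC; rewrite e (Cinv _ mC).
      move: cH h1 h2 h3; rewrite !inE !mem_K mK zmiH mim zim zimi mulgV group1 /=.
      set p := #|H|. set q := #|_ :\ m|. set r := #|_ :\ m^-1|. set s := #|_ :\ z^-1|.
      by move=> hp hq hr hs; move: hp; rewrite hq hr hs.
    have z2 : z ^+ 2 \in H.
      have mz := swapH zG mG mK.
      have : (z * m^-1) * (m * z) \in H by rewrite groupM.
      by rewrite -mulgA (mulgA m^-1) mulVg mul1g expgS expg1.
    have [y yG /andP [zyH y2]] := cr z zG z2.
    have := leq_ltn_trans (mmin y zyH) (key_lt y2).
    by rewrite ltnNge (key_ge m2).
  apply/cards1P; exists m; apply/setP => y; rewrite !inE.
  apply/andP/eqP => [[yC zyH]|->]; last by rewrite mC.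
  case: (inCK y yC zyH) => // e.
  move: hm; rewrite -e zyH andbT negbK => /eqP ey.
  by rewrite -ey e.
Qed.

Lemma pc_crit : (exists C, perfect_code G H C) <-> crit G H.
Proof.
split; [by case=> C /pc_crit_nec | exact: pc_crit_suf].
Qed.

End PC.
End Gen.

Lemma addb_eq (x y : bool) : ~~ (x (+) y) -> x = y.
Proof. by case: x; case: y. Qed.

Section Dih.
Variable gT : finGroupType.
Variables (G H : {group gT}) (a b : gT) (n : nat).
Hypotheses (n3 : (3 <= n)%N) (defG : G :=: <<[set a; b]>>) (oa : #[a] = n)
  (ob : #[b] = 2%N) (bab : b * a * b = a^-1) (cG : #|G| = (2 * n)%N).

Lemma aG : a \in G.
Proof. by rewrite defG mem_gen // !inE eqxx. Qed.
Lemma bG : b \in G.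
Proof. by rewrite defG mem_gen // !inE eqxx orbT. Qed.
Lemma aXG k : a ^+ k \in G.
Proof. exact: groupX aG. Qed.

Lemma bb : b * b = 1.
Proof. by have := expg_order b; rewrite ob expgS expg1. Qed.

Lemma binv : b^-1 = b.
Proof. by apply/eqP; rewrite eq_invg_mul bb. Qed.

Lemma an : a ^+ n = 1.
Proof. by rewrite -oa expg_order. Qed.

Lemma bab_cyc (g : gT) : g \in <[a]> -> b * g * b = g^-1.
Proof.
case/cycleP=> k ->.
have h : a ^ b = a^-1 by rewrite conjgE binv mulgA bab.
have e := conjXg a b k; rewrite h expVgn conjgE binv mulgA in e.
exact e.
Qed.

Lemma refl2 (g : gT) : g \in <[a]> -> (g * b) ^+ 2 = 1.
Proof.
move=> ga; rewrite expgS expg1 -mulgA (mulgA b).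
by rewrite bab_cyc // mulgV.
Qed.

Lemma b_notin : b \notin <[a]>.
Proof.
apply/negP => ba.
have : G \subset <[a]>.
  by rewrite defG gen_subG; apply/subsetP => x; rewrite !inE => /orP [] /eqP ->; rewrite ?cycle_id.
move/subset_leq_card; rewrite cG -orderE oa => h; clear -h n3; lia.
Qed.

Lemma decomp (g : gT) : g \in G -> exists k, g = a ^+ k \/ g = a ^+ k * b.
Proof.
move=> gG.
have TI : <[b]> :&: <[a]> = 1.
  apply: prime_TIg; first by rewrite -orderE ob.
  by rewrite cycle_subG b_notin.
have cM : #|<[a]> * <[b]>| = #|G|.
  have TI' : <[a]> :&: <[b]> = 1 by rewrite setIC.
  by rewrite (TI_cardMg TI') -!orderE oa ob cG mulnC.
have sM : <[a]> * <[b]> \subset G by rewrite mul_subG // cycle_subG ?aG ?bG.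
have : G \subset <[a]> * <[b]>.
  by have := eqEcard (<[a]> * <[b]>) G; rewrite sM cM leqnn eqEsubset => /andP [].
move/subsetP/(_ g gG)/mulsgP => [x y /cycleP [i ->] /cycleP [j ->] ->].
exists i; rewrite -(expg_mod_order b j) ob.
have : (j %% 2 < 2)%N by rewrite ltn_mod.
case: (j %% 2) => [|[|//]] _; first by left; rewrite expg0 mulg1.
by right; rewrite expg1.
Qed.

Lemma mem_cycX m t : (t %| n)%N -> (a ^+ m \in <[a ^+ t]>) = (t %| m)%N.
Proof.
move=> tn; apply/idP/idP.
  case/cycleP=> j /eqP; rewrite -expgnA eq_expg_mod_order oa => /eqP e.
  by rewrite /dvdn -(modn_dvdm m tn) e (modn_dvdm _ tn) modnMr.
by case/dvdnP=> j ->; rewrite mulnC expgnA mem_cycle.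
Qed.


Lemma sqrt_odd (x : gT) : odd n -> x ^+ n = 1 -> (x ^+ 2) ^+ (n.+1)./2 = x.
Proof.
move=> on xn; rewrite -expgnA.
have e : (2 * (n.+1)./2)%N = n.+1.
  have h := evenE (m := n.+1); rewrite /= on in h; rewrite mulnC -h //.
by rewrite e expgSr xn mul1g.
Qed.

Hypothesis nsHG : H <| G.

Lemma HJ (h g : gT) : h \in H -> g \in G -> h ^ g \in H.
Proof. by move=> hH gG; case/andP: nsHG => _ nHG; rewrite memJ_norm // (subsetP nHG). Qed.

Lemma HG (h : gT) : h \in H -> h \in G.
Proof. by case/andP: nsHG => sHG _; apply: (subsetP sHG). Qed.

Lemma refl_y k : exists2 y, y \in G & (a ^+ k * b * y \in H) && (y ^+ 2 == 1).
Proof.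
have r := refl2 (mem_cycle a k).
exists (a ^+ k * b); first by rewrite groupM ?aXG ?bG.
have e : a ^+ k * b * (a ^+ k * b) = 1 by rewrite -r expgS expg1.
by rewrite e group1 r eqxx.
Qed.

Lemma crit_refl j : a ^+ j * b \in H -> crit G H.
Proof.
move=> hH; right => x xG _; case: (decomp xG) => k [->|->]; last exact: refl_y.
exists ((a ^+ k)^-1 * (a ^+ j * b)); first by rewrite groupM ?groupV ?aXG ?groupM ?aXG ?bG.
rewrite mulgA mulgV mul1g hH /= mulgA refl2 //.
by rewrite groupM ?groupV ?mem_cycle.
Qed.

Lemma crit_odd : odd n -> crit G H.
Proof.
move=> on; right => x xG x2H; case: (decomp xG) => k [ek|->]; last exact: refl_y.
exists 1; first exact: group1.
rewrite mulg1 expg1n eqxx andbT.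
have xn : x ^+ n = 1 by rewrite ek -expgnA mulnC expgnA an expg1n.
by rewrite -(sqrt_odd on xn) groupX.
Qed.

Lemma crit_cyc t : ~~ odd n -> (0 < t)%N -> (t %| n)%N -> H :=: <[a ^+ t]> ->
  (odd (n %/ t) \/ (n %/ t = 2)%N \/
        [/\ (4 <= n %/ t)%N, ~~ odd (n %/ t) & odd t]) -> crit G H.
Proof.
move=> en t0 tn HE good.
have cH : #|H| = (n %/ t)%N by rewrite HE -orderE orderXdiv oa.
case: (eqVneq (n %/ t)%N 2) => d2; first by left; rewrite cH d2.
right => x xG; case: (decomp xG) => k [->|->]; last by move=> _; exact: refl_y.
rewrite -expgnA HE mem_cycX // => tk2.
case: (boolP (t %| k)%N) => tk.
  exists 1; first exact: group1.
  by rewrite mulg1 expg1n eqxx andbT mem_cycX.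
case: good => [od|[a0|[_ _ ot]]]; [idtac|by rewrite a0 in d2|].
2:
  by move: tk2; rewrite Gauss_dvdl ?coprimen2 // (negPf tk).
exists (a ^+ n./2); first exact: aXG.
rewrite -expgnDr mem_cycX // (A1 tn en od tk2 tk) /=.
by rewrite -expgnA -(evenE en) an.
Qed.


Lemma G_sub_H : a \in H -> b \in H -> H :=: G.
Proof.
move=> aH bH; apply/eqP; rewrite eqEsubset; apply/andP; split.
  by apply/subsetP => x /HG.
rewrite defG gen_subG; apply/subsetP => x; rewrite !inE => /orP [] /eqP -> //.
Qed.

Lemma rhs_of_crit : crit G H ->
  (H :=: G \/
   (odd n /\ H \subset <[a]>) \/
   (~~ odd n /\
    (H :=: <<[set a ^+ 2; b]>> \/ H :=: <<[set a ^+ 2; a * b]>> \/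
     exists t : nat, [/\ (0 < t)%N, (t %| n)%N, H :=: <[a ^+ t]> &
       (odd (n %/ t) \/ (n %/ t = 2)%N \/
        [/\ (4 <= n %/ t)%N, ~~ odd (n %/ t) & odd t])]))).
Proof.
move=> cr.
case: (boolP (H \subset <[a]>)) => sHa.
  case: (boolP (odd n)) => on; first by right; left.
  right; right; split => //; right; right.
  have Hn : (#|H| %| n)%N by rewrite -oa orderE cardSg.
  have H0 := cardG_gt0 H.
  set t := (n %/ #|H|)%N.
  have nE : n = (t * #|H|)%N by rewrite divnK.
  have t0 : (0 < t)%N by rewrite divn_gt0 // dvdn_leq //; clear -n3; lia.
  have tn : (t %| n)%N by rewrite nE dvdn_mulr.
  have dt : (n %/ t)%N = #|H| by rewrite {1}nE mulKn.
  have HE : H :=: <[a ^+ t]>.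
    apply/eqP; rewrite (eq_subG_cyclic (cycle_cyclic a)) // ?cycle_subG ?mem_cycle //.
    by rewrite -orderE orderXdiv oa // dt.
  exists t; split => //; rewrite dt.
  case: (boolP (odd #|H|)) => oH; first by left.
  case: (eqVneq #|H| 2) => H2; first by right; left.
  right; right; split => //.
    by move: oH H2 H0; set p := #|H|; clear; move=> oH H2 H0; have := evenE oH; lia.
  apply/negPn/negP => et.
  case: cr => [cH|cr].
    by move: oH H2 H0 cH; set p := #|H|; clear; move=> oH H2 H0 cH; have := evenE oH; lia.
  have x2 : (a ^+ t./2) ^+ 2 \in H by rewrite -expgnA -(evenE et) HE cycle_id.
  have [y yG /andP [xyH /eqP y2]] := cr _ (aXG _) x2.
  case: (decomp yG) => k [ey|ey]; rewrite ey in xyH y2.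
    move: xyH; rewrite -expgnDr HE mem_cycX // => tk.
    move/eqP: y2; rewrite -expgnA -order_dvdn oa => nk.
    by apply: (A2 t0 tn _ et nk tk); rewrite dt.
  move/negP: b_notin; apply.
  have : (a ^+ t./2 * a ^+ k)^-1 * (a ^+ t./2 * (a ^+ k * b)) \in <[a]>.
    apply: groupM; last exact: (subsetP sHa _ xyH).
    by rewrite groupV groupM ?mem_cycle.
  by rewrite [_ * (_ * b)]mulgA myKl.
case/subsetPn: sHa => h hH ha.
case: (decomp (HG hH)) => i [ehi|ehi].
  by move: ha; rewrite ehi mem_cycle.
have e : (a ^+ i * b) * (a ^+ i * b) ^ a = a ^+ 2.
  rewrite conjgE.
  transitivity (a ^+ i * (b * (a^-1 * a ^+ i) * b) * a); first by rewrite !mulgA.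
  rewrite bab_cyc ?groupM ?groupV ?mem_cycle ?cycle_id //.
  by rewrite invMg invgK mulgA mulgV mul1g expgS expg1.
have a2H : a ^+ 2 \in H by rewrite -e -ehi groupM // HJ ?aG.
have bH_of_aH : a \in H -> b \in H.
  move=> aH; have : (a ^+ i)^-1 * h \in H by rewrite groupM ?groupV ?groupX.
  by rewrite ehi myKl.
case: (boolP (odd n)) => on.
  have aH : a \in H by rewrite -(sqrt_odd on an) groupX.
  by left; apply: G_sub_H => //; apply: bH_of_aH.
case: (boolP (a \in H)) => aH; first by left; apply: G_sub_H => //; apply: bH_of_aH.
right; right; split => //.
have aXH m : a ^+ m \in H -> ~~ odd m.
  move=> amH; apply/negP => om; move/negP: aH; apply.
  have : ((a ^+ 2) ^+ m./2)^-1 * a ^+ m \in H by rewrite groupM // groupV groupX.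
  have mE := oddE om; set q := m./2 in mE *.
  by rewrite mE (expgSr a (q * 2)) (mulnC q 2) (expgnA a 2 q) mulgA mulVg mul1g.
have bai : b * a ^+ i \in H.
  have : h ^ b \in H by rewrite HJ ?bG.
  by rewrite ehi conjgE binv -mulgA bb mulg1.
have ME (c : bool) : c = odd i -> H :=: <<[set a ^+ 2; a ^+ c * b]>>.
  move=> ci; apply/eqP; rewrite eqEsubset; apply/andP; split; last first.
    rewrite gen_subG; apply/subsetP => x; rewrite !inE => /orP [] /eqP -> //.
    have : ((a ^+ 2) ^+ i./2)^-1 * h \in H by rewrite groupM // groupV groupX.
    have iE : i = (i./2 * 2 + c)%N by rewrite ci muln2 addnC odd_double_half.
    set q := i./2 in iE *.
    by rewrite ehi iE (expgnDr a (q * 2) c) (mulnC q 2) (expgnA a 2 q) -mulgA myKl.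
  apply/subsetP => g gH; case: (decomp (HG gH)) => k [ek|ek]; rewrite ek in gH *.
    have ok := aXH _ gH.
    by rewrite (evenE ok) mulnC expgnA groupX // mem_gen // !inE eqxx.
  have : a ^+ k * b * (b * a ^+ i) \in H by rewrite groupM.
  rewrite -mulgA (mulgA b) bb mul1g -expgnDr => /aXH.
  rewrite oddD -ci => okc.
  have ock : odd k = c by apply: addb_eq.
  have kE : k = (k./2 * 2 + c)%N by rewrite -ock muln2 addnC odd_double_half.
  set q := k./2 in kE *.
  rewrite kE (expgnDr a (q * 2) c) (mulnC q 2) (expgnA a 2 q) -mulgA.
  apply: groupM; [apply: groupX; apply: mem_gen | apply: mem_gen]; by rewrite !inE eqxx ?orbT.
case ci: (odd i).
  by right; left; have := ME true (esym ci); rewrite expg1.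
by left; have := ME false (esym ci); rewrite expg0 mul1g.
Qed.

End Dih.


Theorem theorem3p13 (gT : finGroupType) (G H : {group gT}) (a b : gT) (n : nat) :
  (3 <= n)%N ->
  G :=: <<[set a; b]>> -> #[a] = n -> #[b] = 2%N -> b * a * b = a^-1 ->
  #|G| = (2 * n)%N ->
  H <| G ->
  (exists C : {set gT}, perfect_code G H C) <->
  (H :=: G \/
   (odd n /\ H \subset <[a]>) \/
   (~~ odd n /\
    (H :=: <<[set a ^+ 2; b]>> \/ H :=: <<[set a ^+ 2; a * b]>> \/
     exists t : nat, [/\ (0 < t)%N, (t %| n)%N, H :=: <[a ^+ t]> &
       (odd (n %/ t) \/ (n %/ t = 2)%N \/
        [/\ (4 <= n %/ t)%N, ~~ odd (n %/ t) & odd t])]))).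
Proof.
move=> n3 defG oa ob bab cG nsHG.
rewrite (pc_crit nsHG); split.
  exact: (rhs_of_crit n3 defG oa ob bab cG nsHG).
have bG' := bG defG.
case => [HG|[[on _]|[en [E|[E|[t [t0 tn HE good]]]]]]].
- apply: (crit_refl n3 defG oa ob bab cG (j := 0)).
  by rewrite expg0 mul1g HG.
- exact: (crit_odd H n3 defG oa ob bab cG on).
- apply: (crit_refl n3 defG oa ob bab cG (j := 0)).
  by rewrite expg0 mul1g E mem_gen // !inE eqxx orbT.
- apply: (crit_refl n3 defG oa ob bab cG (j := 1)).
  by rewrite expg1 E mem_gen // !inE eqxx orbT.
- exact: (crit_cyc n3 defG oa ob bab cG en t0 tn HE good).
Qed.
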